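(* Consider a quantum data-syndrome code with $n$ qubits and $m$ measurement bits, $N=2n+m$, and parity check matrix $H_{DS}=[F\ \ I_m]\in\mathbb F_2^{m\times N}$, where $F$ is the $m\times 2n$ matrix with rows $f^{(1)},\dots,f^{(m)}$. Let $\mathscr S_{DS}\subseteq\mathbb F_2^N$ be the row span of $H_{DS}$ and $T$ the $|\mathscr S_{DS}|\times N$ matrix whose rows are exactly the elements of $\mathscr S_{DS}$ (each once). Let $\gamma\in\Delta^{D}$. Then in the restriction of $T$ to the columns indexed by $\overline\gamma$, every bit string in $\mathbb F_2^{\overline\gamma}$ appears equally often as a row.
   Context: Phase space representation: a Pauli operator $X^{x_1}Z^{z_1}\otimes\cdots\otimes X^{x_n}Z^{z_n}$ (modulo phases) is identified with $(x,z)\in\mathbb F_2^{2n}$; for $v=(x,z)$ let $\overline v=(z,x)$. The code is given by pairwise commuting stabilizer generators $g^{(1)},\dots,g^{(l)}\in\mathbb F_2^{2n}$ (i.e. $\overline{g^{(i)}}\cdot g^{(j)}=0$) and a classical generator matrix $G_C=[I_l\ A]\in\mathbb F_2^{l\times m}$; $f^{(i)}=\sum_{j=1}^l(G_C)_{j,i}g^{(j)}$ for $i\in[m]$. Errors are $e=(e_d,e_m)\in\mathbb F_2^{2n}\times\mathbb F_2^m=\mathbb F_2^N$, with $\overline e=(\overline{e_d},e_m)$, and syndrome $\mathrm{syn}(e)_i=f^{(i)}\cdot\overline{e_d}+(e_m)_i$, i.e. $\mathrm{syn}(e)=H_{DS}\overline e$. Vectors are identified with support sets in $[N]$; for $\gamma\subseteq[N]$,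 $\overline\gamma$ is its image under the coordinate permutation swapping $i\leftrightarrow i+n$ for $i\in[n]$ and fixing $2n+1,\dots,N$. $\Delta^{D}=\{\gamma\subseteq[N]:\mathrm{syn}(e)\ne0 \text{ for all nonzero } e \text{ with } \mathrm{supp}(e)\subseteq\gamma\}$. *)

(* Defs.v *)
From HB Require Import structures.
From mathcomp Require Import all_boot all_order all_algebra.
Set Implicit Arguments. Unset Strict Implicit. Unset Printing Implicit Defensive.
Import GRing.Theory.
Local Open Scope ring_scope.

(* Coordinates are 0-based: index k < n is an x-coordinate, n <= k < 2n a
   z-coordinate, 2n <= k the measurement coordinates. *)
Definition bar_nat (n k : nat) : nat :=
  if (k < n)%N then (k + n)%N else if (k < n + n)%N then (k - n)%N else k.

(* the coordinate permutation i <-> i+n (i < n), fixing coordinates >= 2n;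
   used with K = 2n (for g^(i)) and K = 2n + m (for errors / columns) *)
Definition bar_idx (n K : nat) (i : 'I_K) : 'I_K := insubd i (bar_nat n i).

Definition vbar (n K : nat) (v : 'rV['F_2]_K) : 'rV['F_2]_K :=
  \row_i v 0 (bar_idx n i).

Definition barset (n K : nat) (g : {set 'I_K}) : {set 'I_K} :=
  [set bar_idx n i | i in g].

Definition dotF2 (K : nat) (u v : 'rV['F_2]_K) : 'F_2 := \sum_i u 0 i * v 0 i.

Definition GC (l k : nat) (A : 'M['F_2]_(l, k)) : 'M['F_2]_(l, l + k) :=
  row_mx 1%:M A.

Definition fvec (n l k : nat) (g : 'I_l -> 'rV['F_2]_(n + n))
  (A : 'M['F_2]_(l, k)) (i : 'I_(l + k)) : 'rV['F_2]_(n + n) :=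
  \sum_j GC A j i *: g j.

Definition Fmat (n l k : nat) (g : 'I_l -> 'rV['F_2]_(n + n))
  (A : 'M['F_2]_(l, k)) : 'M['F_2]_(l + k, n + n) :=
  \matrix_(i, j) fvec g A i 0 j.

Definition HDS (n l k : nat) (g : 'I_l -> 'rV['F_2]_(n + n))
  (A : 'M['F_2]_(l, k)) : 'M['F_2]_(l + k, n + n + (l + k)) :=
  row_mx (Fmat g A) 1%:M.

Definition syn (n l k : nat) (g : 'I_l -> 'rV['F_2]_(n + n))
  (A : 'M['F_2]_(l, k)) (e : 'rV['F_2]_(n + n + (l + k))) : 'cV['F_2]_(l + k) :=
  HDS g A *m (vbar n e)^T.

Definition DeltaD (n l k : nat) (g : 'I_l -> 'rV['F_2]_(n + n))
  (A : 'M['F_2]_(l, k)) (gamma : {set 'I_(n + n + (l + k))}) : Prop :=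
  forall e : 'rV['F_2]_(n + n + (l + k)),
    e != 0 -> (forall i, i \notin gamma -> e 0 i = 0) -> syn g A e != 0.

Definition SDS (n l k : nat) (g : 'I_l -> 'rV['F_2]_(n + n))
  (A : 'M['F_2]_(l, k)) : {set 'rV['F_2]_(n + n + (l + k))} :=
  [set s | (s <= HDS g A)%MS].

(* number of rows of T (= elements of S_DS) whose restriction to the
   columns in S equals the restriction of b to S *)
Definition row_count (K : nat) (Sp : {set 'rV['F_2]_K}) (S : {set 'I_K})
  (b : 'rV['F_2]_K) : nat :=
  #|[set s in Sp | [forall i in S, s 0 i == b 0 i]]|.

(* Main.v *)
Require Import Defs.
From HB Require Import structures.
From mathcomp Require Import all_boot all_order all_algebra.
From mathcomp Require Import zify.
Set Implicit Arguments. Unset Strict Implicit. Unset Printing Implicit Defensive.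
Import GRing.Theory.
Local Open Scope ring_scope.

Lemma bar_nat_lt (n K k : nat) : (n + n <= K)%N -> (k < K)%N -> (bar_nat n k < K)%N.
Proof. rewrite /bar_nat => h1 h2; case: ifP => ?; last case: ifP => ?; lia. Qed.

Lemma bar_nat_inv (n k : nat) : bar_nat n (bar_nat n k) = k.
Proof.
rewrite /bar_nat; case: (ltnP k n) => h1.
  have -> : (k + n < n)%N = false by lia.
  have -> : (k + n < n + n)%N = true by lia. lia.
case: (ltnP k (n + n)) => h2.
  have -> : (k - n < n)%N = true by lia. lia.
have -> : (k < n)%N = false by lia.
by have -> : (k < n + n)%N = false by lia.
Qed.

Lemma bar_idx_val (n K : nat) (i : 'I_K) : (n + n <= K)%N ->
  val (bar_idx n i) = bar_nat n i.
Proof. by move=> h; rewrite /bar_idx val_insubd bar_nat_lt. Qed.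

Lemma bar_idx_inv (n K : nat) (i : 'I_K) : (n + n <= K)%N ->
  bar_idx n (bar_idx n i) = i.
Proof. by move=> h; apply: val_inj; rewrite !bar_idx_val // bar_nat_inv. Qed.

Theorem lemma13 (n l k : nat) (g : 'I_l -> 'rV['F_2]_(n + n))
  (A : 'M['F_2]_(l, k))
  (hcomm : forall i j : 'I_l, dotF2 (vbar n (g i)) (g j) = 0%R)
  (gamma : {set 'I_(n + n + (l + k))})
  (hgamma : DeltaD g A gamma) :
  forall b1 b2 : 'rV['F_2]_(n + n + (l + k)),
    row_count (SDS g A) (barset n gamma) b1 =
    row_count (SDS g A) (barset n gamma) b2.
Proof.
set N := (n + n + (l + k))%N.
have hK : (n + n <= N)%N by rewrite /N leq_addr.
set S := barset n gamma.
set H := HDS g A.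
set d : 'rV['F_2]_N := \row_j ((j \in S)%:R).
set P := diag_mx d.
have key : P *m cokermx (H *m P) = 0.
  set C := cokermx (H *m P).
  have HPC : H *m (P *m C) = 0 by rewrite mulmxA mulmx_coker.
  apply/matrixP => i j.
  set c : 'cV_N := col j (P *m C).
  have c0 : c = 0.
    set e : 'rV['F_2]_N := vbar n c^T.
    have hvb : vbar n e = c^T.
      apply/matrixP => a b; rewrite !mxE bar_idx_inv // !mxE.
    have he : e = 0.
      have hs : forall a, a \notin gamma -> e 0 a = 0.
        move=> a anot; rewrite /e /c /P mul_diag_mx !mxE.
        case: (boolP (bar_idx n a \in S)) => hin; last by rewrite mul0r.
        exfalso.
        move/imsetP: hin => [a' a'in /(congr1 (@bar_idx n N))].
        by rewrite !bar_idx_inv // => eq; rewrite eq a'in in anot.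
      have hs0 : syn g A e = 0.
        by rewrite /syn hvb trmxK /c colE mulmxA HPC mul0mx.
      apply/eqP; apply: contraT => ne0.
      by have := hgamma e ne0 hs; rewrite hs0 eqxx.
    apply/matrixP => a b; rewrite (ord1 b).
    have := congr1 (fun M : 'rV['F_2]_N => M 0 (bar_idx n a)) he.
    by rewrite !mxE bar_idx_inv.
  have -> : (P *m C) i j = c i 0 by rewrite /c [in RHS]mxE.
  by rewrite c0 !mxE.
have rep : forall b : 'rV['F_2]_N, exists2 s, s \in SDS g A &
    forall i, i \in S -> s 0 i = b 0 i.
  move=> b.
  have : (b *m P <= H *m P)%MS by rewrite submxE -mulmxA key mulmx0.
  case/submxP => u hu.
  exists (u *m H); first by rewrite inE submxMl.
  move=> i iS.
  have := congr1 (fun M : 'rV['F_2]_N => M 0 i) hu.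
  rewrite mulmxA /P !mul_mx_diag !mxE iS mulr1 => ->.
  by rewrite mulr1.
have le : forall b1 b2 : 'rV['F_2]_N,
    (row_count (SDS g A) S b1 <= row_count (SDS g A) S b2)%N.
  move=> b1 b2.
  have [s1 s1in hs1] := rep b1.
  have [s2 s2in hs2] := rep b2.
  rewrite /row_count.
  rewrite -(card_imset _ (addIr (s2 - s1))).
  apply: subset_leq_card; apply/subsetP => x /imsetP [y].
  rewrite inE => /andP [yin /forallP yb] ->.
  rewrite inE; apply/andP; split.
    move: yin s1in s2in; rewrite !inE => /submxP [u ->] /submxP [u1 ->] /submxP [u2 ->].
    by rewrite -mulmxBl -mulmxDl submxMl.
  apply/forallP => i; apply/implyP => iS.
  have := yb i; rewrite iS /= => /eqP yi.
  by rewrite !mxE yi -hs1 // hs2 // addrC addrNK.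
by move=> b1 b2; apply/eqP; rewrite eqn_leq !le.
Qed.
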